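(* Fix $n\in\mathbb N$. For integers $k$ with $1\le |k|\le n$ let $$p_{nk}=\frac{(-1)^{k+1}(n!)^2}{k\,(n+k)!\,(n-k)!},$$ and let $p_{n0}=0$. (Equivalently, $p_{nk}=\pi_{nk}'(0)$ for $|k|\le n$, where $\pi_{nk}$ is the Lagrange basis polynomial of degree $2n$ for the nodes $-n,\dots,n$, i.e. the unique polynomial of degree $2n$ with $\pi_{nk}(j)=\delta_{kj}$ for all integers $|j|\le n$.) Then: (i) the sequence $\bigl((-1)^{k+1}p_{nk}\bigr)_{1\le k\le n}$ is positive and monotone decreasing, and $p_{n,-k}=-p_{nk}$ for $1\le k\le n$; (ii) for integers $0\le j\le 2n$ (with the convention $0^0=1$), $$\sum_{k=-n}^n p_{nk}k^j=\begin{cases}1,& j=1,\\ 0,& j=0\text{ or }2\le j\le 2n;\end{cases}$$ (iii) $\displaystyle\sum_{k=1}^n|p_{nk}|=\frac{H_n}{2}$ and $\displaystyle\sum_{k=1}^n p_{nk}=H_{2n}-H_n$, where $H_n=\sum_{k=1}^n k^{-1}$ is the $n$-th harmonic number. *)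

(* Defs.v *)
From mathcomp Require Import all_boot all_order all_algebra.
Set Implicit Arguments. Unset Strict Implicit. Unset Printing Implicit Defensive.
Import Order.TTheory GRing.Theory Num.Theory.
Local Open Scope ring_scope.

(* p_{nk} = (-1)^(k+1) (n!)^2 / (k (n+k)! (n-k)!) for 1 <= |k| <= n, p_{n0} = 0.
   (-1)^(k+1) = (-1)^(|k|+1) since k and |k| have the same parity.
   Outside |k| <= n the paper leaves p_{nk} undefined; we set it to 0 (never used). *)
Definition pnk (R : fieldType) (n : nat) (k : int) : R :=
  if (k != 0) && (absz k <= n)%N then
    ((-1) ^+ (absz k).+1 * (n`!)%:R ^+ 2) /
    (k%:~R * (absz (n%:Z + k))`!%:R * (absz (n%:Z - k))`!%:R)
  else 0.

Definition harmonic (R : fieldType) (n : nat) : R :=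
  \sum_(1 <= k < n.+1) (k%:R)^-1.

(* Main.v *)
Require Import Defs.
From mathcomp Require Import all_boot all_order all_algebra zify ring lra.
Import Order.TTheory GRing.Theory Num.Theory.
Local Open Scope ring_scope.


Section S.
Variable R : realFieldType.

Lemma fact_neq0 m : (m`!)%:R != 0 :> R.
Proof. by rewrite pnatr_eq0 -lt0n fact_gt0. Qed.

Ltac nz1 := by rewrite ?fact_neq0 // -?natrM -?natrD ?nat1r ?natr1 ?pnatr_eq0.
Ltac nz := repeat (apply/andP; split); nz1.

Lemma pnkN n k : pnk R n (- k) = - pnk R n k.
Proof.
rewrite /pnk abszN oppr_eq0 opprK; case: ifP => _; last by rewrite oppr0.
rewrite mulrNz !mulNr invrN mulrN; congr (- (_ * _^-1)).
by rewrite -!mulrA [X in _ * X]mulrC.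
Qed.

Definition bb n k : R :=
  if (k <= n)%N then (n`!)%:R ^+ 2 / ((n + k)`!%:R * (n - k)`!%:R) else 0.

Lemma pnk_nat n k : (1 <= k <= n)%N ->
  pnk R n k%:Z = (-1) ^+ k.+1 * bb n k / k%:R.
Proof.
move=> /andP[k1 kn]; rewrite /pnk /bb kn.
have -> : (k%:Z != 0) by lia.
have -> : absz (n%:Z + k%:Z) = (n + k)%N by lia.
have -> : absz (n%:Z - k%:Z) = (n - k)%N by lia.
rewrite /= -[k%:~R]/(k%:R : R).
have k0 : k%:R != 0 :> R by rewrite pnatr_eq0 -lt0n.
by field; rewrite k0 !fact_neq0.
Qed.

Lemma pnk_natN n k : (1 <= k <= n)%N ->
  pnk R n (- k%:Z) = - ((-1) ^+ k.+1 * bb n k / k%:R).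
Proof. by move=> h; rewrite pnkN pnk_nat. Qed.

Definition A m (f : nat -> R) := \sum_(i < m.+1) (-1) ^+ i * 'C(m, i)%:R * f i.

Lemma A_S m f : A m.+1 f = A m f - A m (fun i => f i.+1).
Proof.
rewrite /A big_ord_recl /=.
under eq_bigr => i _ do rewrite /bump /= binS natrD mulrDr mulrDl.
rewrite big_split addrA; congr (_ + _).
  rewrite [in LHS]big_ord_recr /= (bin_small (ltnSn m)) mulr0 mul0r addr0 bin0 expr0 !mul1r.
  rewrite [in RHS]big_ord_recl /= expr0 !mul1r bin0 mul1r; congr (_ + _); apply: eq_bigr => i _; by rewrite /bump /= add1n.
apply/eqP; rewrite -addr_eq0 -big_split big1 // => i _; rewrite add1n exprS /=; ring.
Qed.

Lemma A_ext m f g : (forall i, f i = g i) -> A m f = A m g.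
Proof. by move=> h; rewrite /A; apply: eq_bigr => i _; rewrite h. Qed.

Lemma A_add m f g : A m (fun i => f i + g i) = A m f + A m g.
Proof. rewrite /A -big_split; apply: eq_bigr => i _ /=; ring. Qed.

Lemma A_sum m e (F : nat -> nat -> R) :
  A m (fun i => \sum_(l < e) F l i) = \sum_(l < e) A m (F l).
Proof.
rewrite /A exchange_big /=; apply: eq_bigr => i _; rewrite mulr_sumr //.
Qed.

Lemma A_scale m a f : A m (fun i => a * f i) = a * A m f.
Proof. rewrite /A mulr_sumr; apply: eq_bigr => i _ /=; ring. Qed.

Lemma A_poly m : forall e c, (e < m)%N -> A m (fun i => (i%:R + c) ^+ e) = 0.
Proof.
elim: m => [//|m IH] e c he.
rewrite A_S.
rewrite [X in _ - X](@A_ext _ _ (fun i => \sum_(l < e) 'C(e, l)%:R * (i%:R + c) ^+ l + (i%:R + c) ^+ e)); last first.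
  move=> i.
  rewrite /= -natr1 -addrA [1 + c]addrC addrA exprD1n big_ord_recr /= binn mulr1n.
  congr (_ + _); apply: eq_bigr => l _; by rewrite mulr_natl.
rewrite A_add (A_sum m e (fun l i => 'C(e,l)%:R * (i%:R + c)^+l)) big1 ?add0r ?subrr // => l _.
rewrite A_scale IH ?mulr0 //.
by apply: leq_trans (ltn_ord l) _.
Qed.



Lemma binR m i : (i <= m)%N -> 'C(m, i)%:R = m`!%:R / (i`!%:R * (m - i)`!%:R) :> R.
Proof.
move=> h; rewrite -(bin_fact h) natrM natrM.
by field; rewrite !fact_neq0.
Qed.

Lemma sign_eq a b : odd a = odd b -> (-1) ^+ a = (-1) ^+ b :> R.
Proof. by move=> h; rewrite -signr_odd h signr_odd. Qed.

Lemma term1 n i : (i <= 2 * n)%N -> i != n ->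
  pnk R n (i%:Z - n%:Z) * (i%:Z - n%:Z)%:~R =
  ((-1) ^+ n.+1 * n`!%:R ^+ 2 / (2 * n)`!%:R) * ((-1) ^+ i * 'C(2 * n, i)%:R).
Proof.
move=> hi hn; rewrite binR // [RHS](_ : _ = ((-1) ^+ n.+1 * (-1) ^+ i) *
  (n`!%:R ^+ 2 / (2 * n)`!%:R * ((2 * n)`!%:R / (i`!%:R * (2 * n - i)`!%:R)))); last by ring.
case: (ltngtP i n) hn => // h _.
- have -> : i%:Z - n%:Z = - (n - i)%N%:Z by lia.
  set k := (n - i)%N.
  have hk : (1 <= k <= n)%N by lia.
  rewrite pnk_natN // /bb.
  have -> : (k <= n)%N by lia.
  have -> : (n + k = 2 * n - i)%N by lia.
  have -> : (n - k = i)%N by lia.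
  rewrite -exprD (@sign_eq (n.+1 + i) k.+1); last first.
    have -> : (n.+1 + i = k.+1 + i.*2)%N by lia.
    by rewrite oddD odd_double addbF.
  rewrite mulrNz -[k%:~R]/(k%:R : R).
  have k0 : k%:R != 0 :> R by rewrite pnatr_eq0; lia.
  by field; rewrite k0 !fact_neq0.
- have -> : i%:Z - n%:Z = (i - n)%N%:Z by lia.
  set k := (i - n)%N.
  have hk : (1 <= k <= n)%N by lia.
  rewrite pnk_nat // /bb.
  have -> : (k <= n)%N by lia.
  have -> : (n + k = i)%N by lia.
  have -> : (n - k = 2 * n - i)%N by lia.
  rewrite -exprD (@sign_eq (n.+1 + i) k.+1); last first.
    have -> : (n.+1 + i = k.+1 + n.*2)%N by lia.
    by rewrite oddD odd_double addbF.
  rewrite -[k%:~R]/(k%:R : R).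
  have k0 : k%:R != 0 :> R by rewrite pnatr_eq0; lia.
  by field; rewrite k0 !fact_neq0.
Qed.



Lemma pnk0 n : pnk R n 0 = 0.
Proof. by rewrite /pnk eqxx. Qed.

Lemma moment0 n :
  \sum_(i < (2 * n).+1) pnk R n (i%:Z - n%:Z) = 0.
Proof.
set S := (X in X = 0).
have hS : S = - S.
  rewrite {1}/S (reindex_inj rev_ord_inj) /= /S -sumrN.
  apply: eq_bigr => i _; rewrite -pnkN; congr pnk.
  have := ltn_ord i; lia.
have : S *+ 2 == 0 by rewrite mulr2n {1}hS addNr.
by rewrite mulrn_eq0 /= => /eqP.
Qed.

Lemma moment n j : (1 <= j <= 2 * n)%N ->
  \sum_(i < (2 * n).+1) pnk R n (i%:Z - n%:Z) * ((i%:Z - n%:Z)%:~R) ^+ j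
  = (if j == 1%N then 1 else 0).
Proof.
case: j => [//|j] /= hj.
have hn : (n < (2 * n).+1)%N by lia.
pose c : R := (-1) ^+ n.+1 * n`!%:R ^+ 2 / (2 * n)`!%:R.
have hA := @A_poly (2 * n) j (- n%:R) ltac:(lia).
move: hA; rewrite /A (bigD1 (Ordinal hn)) //= => hA.
rewrite (bigD1 (Ordinal hn)) //= subrr pnk0 mul0r add0r.
rewrite (eq_bigr (fun i : 'I_(2 * n).+1 =>
   c * ((-1) ^+ i * 'C(2 * n, i)%:R * (i%:R + - n%:R) ^+ j))); last first.
  move=> i hi; rewrite exprS mulrA term1; last by apply: contra hi => /eqP h; apply/eqP/val_inj.
    by rewrite intrB /c; ring.
  by have := ltn_ord i; lia.
rewrite -mulr_sumr.
have -> : \sum_(i < (2 * n).+1 | i != Ordinal hn)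
      (-1) ^+ i * 'C(2 * n, i)%:R * (i%:R + - n%:R) ^+ j
   = - ((-1) ^+ n * 'C(2 * n, n)%:R * (n%:R + - n%:R) ^+ j) :> R.
  by apply/eqP; rewrite -addr_eq0 addrC hA.
rewrite subrr expr0n; case: j hj {hA} => [|j] hj /=; last by rewrite !mulr0 oppr0 mulr0.
rewrite mulr1 /c binR; last by lia.
have -> : (2 * n - n = n)%N by lia.
rewrite [LHS](_ : _ = (-1) ^+ n.+1 * ((-1) ^+ n.+1 * (n`!%:R ^+ 2 / (2 * n)`!%:R *
  ((2 * n)`!%:R / (n`!%:R * n`!%:R))))); last by rewrite exprS; ring.
by rewrite signrMK; field; rewrite !fact_neq0.
Qed.


Lemma bb_gt0 n k : (k <= n)%N -> 0 < bb n k.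
Proof.
move=> h; rewrite /bb h divr_gt0 // ?exprn_gt0 ?mulr_gt0 // ltr0n fact_gt0 //.
Qed.

Lemma bb_ge0 n k : 0 <= bb n k.
Proof.
case: (leqP k n) => h; first by rewrite ltW // bb_gt0.
by rewrite /bb leqNgt h.
Qed.

Lemma bb_out n k : (n < k)%N -> bb n k = 0.
Proof. by move=> h; rewrite /bb leqNgt h. Qed.

Lemma bbR1 n k : bb n k.+1 * (n + k.+1)%:R = bb n k * (n - k)%:R.
Proof.
case: (ltngtP k n) => h.
- rewrite /bb h ltnW //.
  rewrite addnS factS -(subnSK h) factS !natrM.
  have h1 : (n + k).+1%:R != 0 :> R by rewrite pnatr_eq0.
  have h2 : (n - k.+1).+1%:R != 0 :> R by rewrite pnatr_eq0.
  by field; nz.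
- by rewrite !bb_out ?mul0r // ltnW.
- by rewrite h subnn mulr0 bb_out ?mul0r.
Qed.

Lemma bbR2 n k : (k <= n)%N ->
  bb n k = bb n.+1 k * ((n.+1 + k)%:R * (n.+1%:R - k%:R)) / n.+1%:R ^+ 2.
Proof.
move=> h; rewrite /bb h (leq_trans h) //.
have -> : (n.+1 - k = (n - k).+1)%N by lia.
rewrite -natrB; last by lia.
have -> : (n.+1 - k = (n - k).+1)%N by lia.
rewrite addSn !factS !natrM.
have h1 : (n + k).+1%:R != 0 :> R by rewrite pnatr_eq0.
have h2 : (n - k).+1%:R != 0 :> R by rewrite pnatr_eq0.
have h3 : n.+1%:R != 0 :> R by rewrite pnatr_eq0.
by field; nz.
Qed.

Lemma bb1 n : bb n 1 * n.+1%:R = n%:R.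
Proof.
case: n => [|n]; first by rewrite bb_out // mul0r.
rewrite /bb ltn0Sn addn1 subn1 /= [(n.+2)`!]factS [(n.+1)`!]factS !natrM.
have h1 : n.+2%:R != 0 :> R by rewrite pnatr_eq0.
have h3 : n.+1%:R != 0 :> R by rewrite pnatr_eq0.
by field; nz.
Qed.



Lemma tele (f : nat -> R) (T : nat -> R) a b : (a <= b)%N ->
  (forall k, f k = T k - T k.+1) -> \sum_(a <= k < b) f k = T a - T b.
Proof.
move=> hab hf; rewrite (eq_bigr (fun k => - (T k.+1 - T k))); last by move=> k _; rewrite hf opprB.
by rewrite sumrN telescope_sumr // opprB.
Qed.

Lemma sumk n : \sum_(1 <= k < n.+1) k%:R * bb n k = n%:R / 2.
Proof.
rewrite (@tele _ (fun k => (n + k)%:R * bb n k / 2)) //.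
  rewrite (@bb_out n n.+1 (ltnSn n)) mulr0 mul0r subr0.
  by rewrite addn1 [_ * bb n 1]mulrC bb1.
move=> k; rewrite [in (n + k.+1)%:R * _]mulrC bbR1.
case: (leqP k n) => h; last by rewrite bb_out // !(mulr0, mul0r) subr0.
rewrite natrB // natrD; by field; nz.
Qed.



Lemma sumk_alt n : (1 <= n)%N ->
  \sum_(1 <= k < n.+1) (-1) ^+ k.+1 * (k%:R * bb n k) = n%:R / (2 * (2 * n%:R - 1)).
Proof.
move=> n1.
have hD : 2 * n%:R - 1 != 0 :> R.
  apply: lt0r_neq0; have : 1 <= n%:R :> R by rewrite ler1n.
  lra.
rewrite (@tele _ (fun k => (-1) ^+ k.+1 * ((2 * k%:R - 1) * (n + k)%:R * bb n k)
   / (2 * (2 * n%:R - 1)))) //.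
  rewrite (@bb_out n n.+1 (ltnSn n)) !(mulr0, mul0r) subr0.
  rewrite addn1 -(mulrA _ n.+1%:R) [n.+1%:R * _]mulrC bb1 expr2 mulN1r opprK mul1r.
  by field; rewrite hD; nz.
move=> k.
have E : (n + k.+1)%:R * bb n k.+1 = bb n k * (n - k)%:R by rewrite mulrC bbR1.
rewrite -[(2 * k.+1%:R - 1) * _ * bb n k.+1]mulrA E.
case: (leqP k n) => h; last by rewrite bb_out // !(mulr0, mul0r) subr0.
rewrite natrB // natrD -[k.+1%:R]natr1 !exprS.
by field; rewrite hD; nz.
Qed.



Lemma bb_step n k : (1 <= k)%N ->
  bb n.+1 k / k%:R = bb n k / k%:R + k%:R * bb n.+1 k / n.+1%:R ^+ 2.
Proof.
move=> k1.
have k0 : k%:R != 0 :> R by rewrite pnatr_eq0 -lt0n.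
case: (ltngtP k n.+1) => h.
- rewrite (@bbR2 n k) //; by field; rewrite k0; nz.
- by rewrite !bb_out // ?(mul0r, mulr0, addr0) //; apply: ltn_trans h.
- rewrite h (@bb_out n n.+1) // mul0r add0r; by field; nz.
Qed.

Lemma S1 n : \sum_(1 <= k < n.+1) bb n k / k%:R = harmonic R n / 2.
Proof.
elim: n => [|n IH]; first by rewrite /harmonic !big_geq // mul0r.
rewrite (eq_big_nat _ _ (fun k (hk : (1 <= k < n.+2)%N) => @bb_step n k (proj1 (andP hk)))).
rewrite big_split /= big_nat_recr //= (@bb_out n n.+1) // mul0r addr0 IH.
rewrite -mulr_suml sumk /harmonic [in RHS]big_nat_recr //=.
by field; nz.
Qed.

Lemma S2 n : \sum_(1 <= k < n.+1) (-1) ^+ k.+1 * (bb n k / k%:R)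
   = harmonic R (2 * n) - harmonic R n.
Proof.
elim: n => [|n IH]; first by rewrite /harmonic !big_geq // subrr.
rewrite (eq_big_nat _ _ (fun k (hk : (1 <= k < n.+2)%N) =>
   congr1 (fun x => (-1) ^+ k.+1 * x) (@bb_step n k (proj1 (andP hk))))).
under eq_bigr do rewrite mulrDr.
rewrite big_split /= big_nat_recr //= (@bb_out n n.+1) // mul0r mulr0 addr0 IH.
rewrite (eq_bigr (fun i => (-1) ^+ i.+1 * (i%:R * bb n.+1 i) / n.+1%:R ^+ 2)); last first.
  by move=> i _; rewrite !mulrA.
rewrite -mulr_suml sumk_alt // /harmonic.
have -> : (2 * n.+1 = (2 * n).+2)%N by lia.
rewrite [\sum_(1 <= k < (2 * n).+3) _]big_nat_recr //= [\sum_(1 <= k < (2 * n).+2) _]big_nat_recr //=.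
rewrite [\sum_(1 <= k < n.+2) _]big_nat_recr //=.
have hD : 2 * n.+1%:R - 1 != 0 :> R.
  apply: lt0r_neq0; have : 1 <= n.+1%:R :> R by rewrite ler1n.
  lra.
have e1 : (2 * n).+1%:R = 2 * n%:R + 1 :> R by rewrite -natr1 natrM.
have e2 : (2 * n).+2%:R = 2 * n%:R + 2 :> R by rewrite -natr1 e1; ring.
have e3 : n.+1%:R = n%:R + 1 :> R by rewrite -natr1.
rewrite e1 e2 e3.
have h1 : 2 * n%:R + 1 != 0 :> R by rewrite -e1 pnatr_eq0.
have h2 : 2 * n%:R + 2 != 0 :> R by rewrite -e2 pnatr_eq0.
have h3 : n%:R + 1 != 0 :> R by rewrite -e3 pnatr_eq0.
by field; rewrite h1 h2 h3.
Qed.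


Lemma apnk n k : (1 <= k <= n)%N -> (-1) ^+ k.+1 * pnk R n k%:Z = bb n k / k%:R.
Proof. by move=> h; rewrite pnk_nat // mulrA signrMK. Qed.

Lemma decr n k : (1 <= k < n)%N -> bb n k.+1 / k.+1%:R < bb n k / k%:R.
Proof.
move=> /andP[k1 kn].
have hb := @bb_gt0 n k (ltnW kn).
have E : bb n k.+1 = bb n k * ((n - k)%:R / (n + k.+1)%:R).
  by rewrite mulrA -bbR1 mulfK // pnatr_eq0 addnS.
rewrite E -mulrA ltr_pM2l //.
rewrite -mulrA -invfM ltr_pdivrMr ?mulr_gt0 ?ltr0n ?addnS // mulrC ltr_pdivlMr ?ltr0n //.
rewrite -!natrM ltr_nat.
nia.
Qed.
End S.

Theorem mainTheorem1 (R : realFieldType) (n : nat) :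
  (* (i) positivity, strict decrease, and oddness *)
  ((forall k : nat, (1 <= k <= n)%N ->
      0 < (-1) ^+ k.+1 * pnk R n k%:Z) /\
   (forall k : nat, (1 <= k < n)%N ->
      (-1) ^+ k.+2 * pnk R n k.+1%:Z < (-1) ^+ k.+1 * pnk R n k%:Z) /\
   (forall k : nat, (1 <= k <= n)%N ->
      pnk R n (- k%:Z) = - pnk R n k%:Z)) /\
  (* (ii) moment identities *)
  (forall j : nat, (j <= 2 * n)%N ->
      \sum_(i < (2 * n).+1)
         pnk R n (i%:Z - n%:Z) * ((i%:Z - n%:Z)%:~R) ^+ j
      = (if j == 1%N then 1 else 0)) /\
  (* (iii) harmonic-number identities *)
  (\sum_(1 <= k < n.+1) `|pnk R n k%:Z| = harmonic R n / 2 /\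
   \sum_(1 <= k < n.+1) pnk R n k%:Z = harmonic R (2 * n) - harmonic R n).
Proof.
split; [split; [|split]|split; [|split]].
- move=> k hk; rewrite apnk // divr_gt0 ?ltr0n ?bb_gt0 //; lia.
- move=> k hk; rewrite !apnk; [|lia|lia]; exact: decr.
- by move=> k _; rewrite pnkN.
- case=> [|j] hj.
    rewrite /= (eq_bigr (fun i : 'I_(2 * n).+1 => pnk R n (i%:Z - n%:Z))) ?moment0 //.
    by move=> i _; rewrite expr0 mulr1.
  by apply: moment; lia.
- rewrite -S1; apply: eq_big_nat => k hk.
  rewrite pnk_nat // -mulrA normrM normr_sign mul1r ger0_norm //.
  by rewrite divr_ge0 ?bb_ge0 ?ler0n.
- rewrite -S2; apply: eq_big_nat => k hk.
  by rewrite pnk_nat // mulrA.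
Qed.
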